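(* Let $n,t\in\mathbb N$, let $\mathcal H$ be an $n$-vertex hypergraph with more than $tn$ edges, and let $r:=e(\mathcal H)-tn$. If there exist distinct pairwise intersecting edges $e_1,\dots,e_{2r+2}\in\mathcal H$ such that $\{e_{2i-1},e_{2i}\}$ is $t$-useful for every $i\in[r+1]$, then $\chi'_\ell(\mathcal H)<tn$.
   Context: A hypergraph $\mathcal H$ has a finite vertex set $V(\mathcal H)$ and a finite set of edges, each edge $e$ with a nonempty set $V(e)\subseteq V(\mathcal H)$ (multiple edges allowed); $n$-vertex means $|V(\mathcal H)|=n$; $e(\mathcal H)$ is the number of edges. Edges $f_1,\dots,f_k$ are pairwise intersecting if their vertex sets pairwise intersect. $N(e)$ is the set of edges $f\neq e$ with $V(e)\cap V(f)\neq\emptyset$. In an $n$-vertex hypergraph, a pair $\{e,f\}$ of distinct edges is $t$-useful if $V(e)\cap V(f)\neq\emptyset$ and $|N(e)\cap N(f)|\leq tn-3$. The list chromatic index $\chi'_\ell(\mathcal H)$ is the least $s$ such that for every assignment of lists $C(e)$ with $|C(e)|\geq s$ there is a proper edge-colouring $\phi$ (distinct edges of equal colour have disjoint vertex sets) with $\phi(e)\in C(e)$ for all $e$. $[m]=\{1,\dots,m\}$. *)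

(* Defs.v *)
From mathcomp Require Import all_boot.
Set Implicit Arguments. Unset Strict Implicit. Unset Printing Implicit Defensive.

(* A hypergraph is given by a finite vertex type V, a finite edge type E
   (so multiple edges are allowed) and the vertex set map verts : E -> {set V};
   nonemptiness of edges is a hypothesis of the theorem. *)

Section Hyper.
Variables (V E : finType) (verts : E -> {set V}).

Definition nbhd (e : E) : {set E} :=
  [set f | (f != e) && (verts e :&: verts f != set0)].

(* {e,f} is t-useful in the n-vertex hypergraph: distinct, intersecting,
   and |N(e) ∩ N(f)| <= t n - 3 (in the integers; written without truncated
   subtraction as |N(e) ∩ N(f)| + 3 <= t n). *)
Definition t_useful (n t : nat) (e f : E) : Prop :=
  [/\ e != f, verts e :&: verts f != set0 & #|nbhd e :&: nbhd f| + 3 <= t * n].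

Definition proper_colouring (phi : E -> nat) : Prop :=
  forall e f, e != f -> phi e = phi f -> [disjoint verts e & verts f].

Definition list_edge_colourable (s : nat) : Prop :=
  forall C : E -> seq nat, (forall e, s <= size (undup (C e))) ->
  exists phi : E -> nat, (forall e, phi e \in C e) /\ proper_colouring phi.

Definition list_chromatic_index_lt (k : nat) : Prop :=
  exists2 s, s < k & list_edge_colourable s.

End Hyper.

(* Main.v *)
Require Import Defs.
From mathcomp Require Import all_boot zify.
Set Implicit Arguments. Unset Strict Implicit. Unset Printing Implicit Defensive.

Lemma hall (X T : finType) (t0 : T) n : forall (A : X -> {set T}) (I : {set X}),
  #|I| <= n ->
  (forall S : {set X}, S \subset I -> #|S| <= #|\bigcup_(i in S) A i|) ->
  exists f : X -> T, {in I &, injective f} /\ {in I, forall i, f i \in A i}.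
Proof.
elim: n => [|n IH] A I hI H.
  exists (fun _ => t0); move: hI; rewrite leqn0 cards_eq0 => /eqP ->.
  by split => i; rewrite inE.
case: (boolP [exists S : {set X}, [&& S \proper I, S != set0 &
            #|\bigcup_(i in S) A i| <= #|S|]]).
- case/existsP => S /and3P [SI S0 crit].
  have sSI : S \subset I by case/andP: SI.
  have [f1 [f1i f1A]] : exists f : X -> T, {in S &, injective f} /\ {in S, forall i, f i \in A i}.
    apply: IH => [|S' sS'].
      by rewrite -ltnS (leq_trans (proper_card SI)).
    by apply: H; apply: subset_trans sSI.
  set U := \bigcup_(i in S) A i.
  have [f2 [f2i f2A]] : exists f : X -> T, {in I :\: S &, injective f} /\
      {in I :\: S, forall i, f i \in A i :\: U}.
    apply: IH => [|S' sS'].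
      rewrite cardsD (setIidPr sSI) -ltnS (leq_trans _ hI) //.
      have := S0; rewrite -card_gt0 => S0'.
      have : #|S| <= #|I| by apply: subset_leq_card.
      move: S0'; case: #|I| => [|k] //=; case: #|S| => // j _ _.
      by rewrite subSS ltnS leq_subr.
    have dis : [disjoint S' & S].
      rewrite -setI_eq0; apply/eqP/setP => x; rewrite !inE.
      apply/negbTE; apply/negP => /andP [xS' xS].
      by move: (subsetP sS' x xS'); rewrite !inE xS.
    have h1 := H (S' :|: S).
    have : S' :|: S \subset I.
      rewrite subUset sSI andbT; apply: subset_trans sS' (subsetDl _ _).
    move/h1; rewrite cardsU.
    move: dis; rewrite -setI_eq0 => /eqP ->; rewrite cards0 subn0 => h2.
    have h3 : \bigcup_(i in S' :|: S) A i \subset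
              (\bigcup_(i in S') (A i :\: U)) :|: U.
      apply/subsetP => c /bigcupP [i iS cA].
      case cU: (c \in U); first by rewrite inE cU orbT.
      rewrite inE; apply/orP; left; apply/bigcupP; exists i.
        move: iS; rewrite inE; case/orP => // iS.
        by move: cU; rewrite /U; move/negbT/bigcupP; case; exists i.
      by rewrite inE cU cA.
    have h4 := subset_leq_card h3.
    have h5 := leq_card_setU (\bigcup_(i in S') (A i :\: U)) U.
    rewrite -(leq_add2r #|S|); apply: (leq_trans h2); apply: (leq_trans h4).
    by apply: (leq_trans h5); rewrite leq_add2l.
  exists (fun i => if i \in S then f1 i else f2 i); split.
    move=> i j iI jI /=.
    case iS: (i \in S); case jS: (j \in S).
    + by apply: f1i.
    + move=> e; have := f2A j; rewrite inE jS jI => /(_ isT).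
      rewrite inE -e; case/andP => /negP; case; apply/bigcupP; exists i => //.
      exact: f1A.
    + move=> e; have := f2A i; rewrite inE iS iI => /(_ isT).
      rewrite inE e; case/andP => /negP; case; apply/bigcupP; exists j => //.
      exact: f1A.
    + by apply: f2i; rewrite inE ?iS ?jS.
  move=> i iI /=; case iS: (i \in S); first exact: f1A.
  have := f2A i; rewrite inE iS iI => /(_ isT); rewrite inE; case/andP => //.
- move=> ncrit.
  case: (set_0Vmem I) => [-> | [i0 i0I]].
    by exists (fun _ => t0); split => i; rewrite inE.
  have : 0 < #|A i0|.
    have := H [set i0]; rewrite sub1set i0I cards1 big_set1; exact.
  rewrite card_gt0 => /set0Pn [x xA].
  have [f' [f'i f'A]] : exists f : X -> T, {in I :\ i0 &, injective f} /\
      {in I :\ i0, forall i, f i \in A i :\ x}.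
    apply: IH => [|S sS].
      by rewrite -ltnS (leq_trans _ hI) // (cardsD1 i0 I) i0I.
    case: (set_0Vmem S) => [-> | [j jS]]; first by rewrite cards0.
    have pS : S \proper I.
      rewrite properEneq (subset_trans sS (subsetDl _ _)) andbT.
      apply/eqP => eSI; move: (subsetP sS i0); rewrite eSI i0I !inE eqxx /=.
      by move/(_ isT).
    have : ~~ (#|\bigcup_(i in S) A i| <= #|S|).
      apply/negP => c; move/negP: ncrit; apply; apply/existsP; exists S.
      rewrite pS c andbT /=; apply/set0Pn; by exists j.
    rewrite -ltnNge => lt.
    have h3 : \bigcup_(i in S) A i \subset x |: \bigcup_(i in S) (A i :\ x).
      apply/subsetP => c /bigcupP [i iS cA].
      rewrite !inE; case: eqP => //= cx; apply/bigcupP; exists i => //.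
      by rewrite !inE cA andbT; apply/eqP.
    have := subset_leq_card h3; rewrite cardsU1.
    move=> h; rewrite -ltnS; apply: (leq_trans lt); apply: (leq_trans h).
    by case: (x \notin _).
  exists (fun i => if i == i0 then x else f' i); split.
    move=> i j iI jI /=.
    case: (eqVneq i i0) => [-> | ni]; case: (eqVneq j i0) => [-> | nj] //.
    + move=> e; have := f'A j; rewrite !inE nj jI => /(_ isT).
      by rewrite -e eqxx.
    + move=> e; have := f'A i; rewrite !inE ni iI => /(_ isT).
      by rewrite e eqxx.
    + by apply: f'i; rewrite !inE ?ni ?nj ?iI ?jI.
  move=> i iI /=; case: (eqVneq i i0) => [-> // | ni].
  have := f'A i; rewrite !inE ni iI => /(_ isT); case/andP => //.
Qed.

Lemma listcol (X T J : finType) (t0 : T) (adj : X -> X -> bool)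
  (adjC : forall u v, adj u v = adj v u) (a b : J -> X) n :
  forall (L : X -> {set T}) (W : {set X}) (P : {set J}), #|W| <= n ->
  {in P &, injective a} -> {in P &, injective b} ->
  (forall i j, i \in P -> j \in P -> a i != b j) ->
  (forall j, j \in P -> [&& a j \in W, b j \in W & ~~ adj (a j) (b j)]) ->
  (forall v, v \in W -> #|W| <= #|L v| + #|P|) ->
  exists phi : X -> T, {in W, forall v, phi v \in L v} /\
    (forall u v, u \in W -> v \in W -> u != v -> adj u v -> phi u != phi v).
Proof.
elim: n => [|n IH] L W P hW ai bi abn pW hL.
  exists (fun _ => t0); move: hW; rewrite leqn0 cards_eq0 => /eqP ->.
  by split => [v|u v]; rewrite inE.
case: (boolP [exists j, (j \in P) && (L (a j) :&: L (b j) != set0)]).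
- case/existsP => j /andP [jP /set0Pn [c]]; rewrite inE => /andP [ca cb].
  case/and3P: (pW j jP) => aW bW nab.
  set W' := W :\: [set a j; b j].
  have [phi' [phiL phiP]] : exists phi : X -> T, {in W', forall v, phi v \in L v :\ c} /\
    (forall u v, u \in W' -> v \in W' -> u != v -> adj u v -> phi u != phi v).
    apply: (IH _ W' (P :\ j)).
    + rewrite -ltnS (leq_trans _ hW) // /W' cardsD.
      have -> : W :&: [set a j; b j] = [set a j; b j].
        by apply/setIidPr; rewrite subUset !sub1set aW bW.
      rewrite cards2 (abn j j jP jP) /=.
      have : 2 <= #|W|.
        apply: (leq_trans _ (subset_leq_card (_ : [set a j; b j] \subset W))).
          by rewrite cards2 (abn j j jP jP).
        by rewrite subUset !sub1set aW bW.
      lia.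
    + by move=> x y; rewrite !inE => /andP [_ ?] /andP [_ ?]; apply: ai.
    + by move=> x y; rewrite !inE => /andP [_ ?] /andP [_ ?]; apply: bi.
    + by move=> x y; rewrite !inE => /andP [_ ?] /andP [_ ?]; apply: abn.
    + move=> i; rewrite !inE => /andP [ij iP]; case/and3P: (pW i iP) => -> -> ->.
      rewrite !andbT (negbTE (abn i j iP jP)) (eq_sym (b i)) (negbTE (abn j i jP iP)) !orbF.
      apply/andP; split.
        by apply/negP => /eqP /ai => /(_ iP jP) /eqP; rewrite (negbTE ij).
      by apply/negP => /eqP /bi => /(_ iP jP) /eqP; rewrite (negbTE ij).
    + move=> v; rewrite /W' !inE => /andP [vn vW].
      have := hL v vW.
      rewrite (cardsD1 j P) jP add1n addnS.
      have : #|L v| <= (#|L v :\ c|).+1.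
        by rewrite (cardsD1 c (L v)); case: (c \in L v).
      have: #|W :\: [set a j; b j]| + 2 = #|W|.
        rewrite cardsD.
        have -> : W :&: [set a j; b j] = [set a j; b j].
          by apply/setIidPr; rewrite subUset !sub1set aW bW.
        rewrite cards2 (abn j j jP jP) /= subnK //.
        apply: (leq_trans _ (subset_leq_card (_ : [set a j; b j] \subset W))).
          by rewrite cards2 (abn j j jP jP).
        by rewrite subUset !sub1set aW bW.
      move=> <- h1 h2.
      lia.
  exists (fun v => if v \in [set a j; b j] then c else phi' v); split.
    move=> v vW /=; case: ifP => vab.
      by move: vab; rewrite !inE => /orP [] /eqP ->.
    have := phiL v; rewrite /W' in_setD vab vW => /(_ isT); rewrite !inE; case/andP => //.
  move=> u v uW vW uv auv /=.
  case: ifP => ua; case: ifP => va.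
  + move: ua va uv auv; rewrite !inE => /orP [] /eqP -> /orP [] /eqP ->;
      rewrite ?eqxx //; move=> _ h; move: nab; by rewrite ?h // adjC h.
  + have := phiL v; rewrite /W' in_setD va vW => /(_ isT); rewrite !inE; case/andP => h _.
    by rewrite eq_sym.
  + have := phiL u; rewrite /W' in_setD ua uW => /(_ isT); rewrite !inE; case/andP => //.
  + by apply: phiP => //; rewrite /W' in_setD ?ua ?va ?uW ?vW.
- rewrite negb_exists => /forallP disj.
  suff : exists f : X -> T, {in W &, injective f} /\ {in W, forall i, f i \in L i}.
    case=> phi [phii phiL].
    exists phi; split => // u v uW vW uv _; apply/negP => /eqP e.
    by move: uv; rewrite (phii u v uW vW e) eqxx.
  apply: (hall t0 (leqnn #|W|)) => S sS.
  have ha : #|a @: P| = #|P| by apply: card_in_imset.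
  have hb : #|b @: P| = #|P| by apply: card_in_imset.
  have hab : [disjoint a @: P & b @: P].
    rewrite -setI_eq0; apply/eqP/setP => x; rewrite !inE.
    apply/negbTE/negP => /andP [/imsetP [i iP ->] /imsetP [j jP e]].
    by move: (abn i j iP jP); rewrite e eqxx.
  have h2P : #|P| + #|P| <= #|W|.
    rewrite -{1}ha -hb.
    have := cardsU (a @: P) (b @: P); move: hab; rewrite -setI_eq0 => /eqP ->.
    rewrite cards0 subn0 => <-.
    apply: subset_leq_card; rewrite subUset; apply/andP; split;
      apply/subsetP => x /imsetP [i iP ->]; by case/and3P: (pW i iP).
  case: (set_0Vmem S) => [-> | [v0 v0S]]; first by rewrite cards0.
  have v0W : v0 \in W by apply: (subsetP sS).
  have hv0 : #|L v0| <= #|\bigcup_(i in S) L i|.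
    by apply: subset_leq_card; apply: bigcup_sup.
  case: (boolP [exists j, (j \in P) && (a j \in S) && (b j \in S)]).
  + case/existsP => j /andP [/andP [jP ajS] bjS].
    have : #|L (a j) :|: L (b j)| <= #|\bigcup_(i in S) L i|.
      apply: subset_leq_card; rewrite subUset !bigcup_sup //.
    have := cardsU (L (a j)) (L (b j)).
    have := disj j; rewrite jP /= negbK => /eqP ->; rewrite cards0 subn0 => ->.
    case/and3P: (pW j jP) => aW bW _.
    have := hL _ aW; have := hL _ bW; move=> h1 h2 h3.
    have := subset_leq_card sS; lia.
  + rewrite negb_exists => /forallP nS.
    set g := fun j => if a j \in S then b j else a j.
    have gi : {in P &, injective g}.
      move=> i j iP jP; rewrite /g.
      case: ifP => ai'; case: ifP => aj' e.
      * exact: bi.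
      * by move: (abn j i jP iP); rewrite e eqxx.
      * by move: (abn i j iP jP); rewrite e eqxx.
      * exact: ai.
    have gW : g @: P \subset W :\: S.
      apply/subsetP => x /imsetP [j jP ->]; rewrite /g inE.
      case/and3P: (pW j jP) => aW bW _.
      have := nS j; rewrite jP /=.
      by case: ifP => ajS; rewrite ?ajS ?andbT /= => h; rewrite ?h ?aW ?bW.
    have := subset_leq_card gW; rewrite card_in_imset // cardsD.
    rewrite (setIidPr sS) => hP.
    have := hL v0 v0W => h.
    have := subset_leq_card sS; lia.
Qed.

Lemma colour_main (V E J : finType) (verts : E -> {set V}) (a b : J -> E) (k : nat) :
  injective a -> injective b -> (forall i j, a i != b j) ->
  (forall j, verts (a j) :&: verts (b j) == set0) ->
  #|E| <= k + #|J| ->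
  list_edge_colourable verts k.
Proof.
move=> ai bi abn dab hk C hC.
pose M := (\max_(e : E) \max_(c <- C e) c).+1.
have cM : forall e c, c \in C e -> c < M.
  move=> e c ce; rewrite ltnS.
  apply: leq_trans (leq_bigmax e).
  by apply: (@leq_bigmax_seq _ _ xpredT (fun c => c) c ce).
pose L := fun e => [set c : 'I_M | val c \in C e].
have hL : forall e, k <= #|L e|.
  move=> e; apply: (leq_trans (hC e)).
  rewrite cardE -(size_map val); apply: uniq_leq_size; first exact: undup_uniq.
  move=> c; rewrite mem_undup => ce.
  apply/mapP; exists (Ordinal (cM e c ce)) => //.
  by rewrite mem_enum inE.
pose adj := fun u v => verts u :&: verts v != set0.
have adjC : forall u v, adj u v = adj v u by move=> u v; rewrite /adj setIC.
have [phi [phiL phiP]] := @listcol E 'I_M J ord0 adj adjC a b #|E| L setT setT (eq_leq (cardsT E))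
  (in2W ai) (in2W bi) (fun i j _ _ => abn i j)
  (fun j _ => ltac:(by rewrite !inE /adj negbK dab)) 
  (fun v _ => ltac:(by rewrite !cardsT (leq_trans hk) // leq_add2r hL)).
exists (fun e => val (phi e)); split.
  by move=> e; have := phiL e; rewrite !inE => /(_ isT).
move=> e f ef pef; rewrite -setI_eq0.
apply/negPn/negP => aef.
by move: (phiP e f (in_setT e) (in_setT f) ef aef); rewrite (val_inj pef) eqxx.
Qed.

Theorem proposition4p3 (V E : finType) (verts : E -> {set V})
    (verts_nonempty : forall e : E, verts e != set0)
    (n t : nat) (hn : #|V| = n) (hedges : t * n < #|E|)
    (es : 'I_(2 * (#|E| - t * n) + 2) -> E)
    (es_inj : injective es)
    (es_inter : forall i j, verts (es i) :&: verts (es j) != set0)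
    (es_useful : forall i j : 'I_(2 * (#|E| - t * n) + 2),
        ~~ odd i -> val j = (val i).+1 -> t_useful verts n t (es i) (es j)) :
  list_chromatic_index_lt verts (t * n).
Proof.
move: es es_inj es_inter es_useful.
set r := #|E| - t * n => es es_inj es_inter es_useful.
have hE : #|E| = t * n + r by rewrite /r; lia.
have h1 : forall j : 'I_(r.+1), 2 * j < 2 * r + 2 by move=> j; have := ltn_ord j; lia.
have h2 : forall j : 'I_(r.+1), (2 * j).+1 < 2 * r + 2 by move=> j; have := ltn_ord j; lia.
pose e_ := fun j : 'I_(r.+1) => es (Ordinal (h1 j)).
pose f_ := fun j : 'I_(r.+1) => es (Ordinal (h2 j)).
have us : forall j, t_useful verts n t (e_ j) (f_ j).
  move=> j; apply: es_useful => //=; by rewrite mul2n odd_double.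
have tn3 : 3 <= t * n.
  by case: (us ord0) => _ _ h; apply: leq_trans h; rewrite leq_addl.
pose K := fun j => ~: ((nbhd verts (e_ j) :&: nbhd verts (f_ j)) :|: [set e_ j; f_ j]).
have hK : forall j, r.+1 <= #|K j|.
  move=> j; case: (us j) => _ _ hu.
  have := cardsC ((nbhd verts (e_ j) :&: nbhd verts (f_ j)) :|: [set e_ j; f_ j]).
  have := leq_card_setU (nbhd verts (e_ j) :&: nbhd verts (f_ j)) [set e_ j; f_ j].
  case=> hU _; have : #|[set e_ j; f_ j]| <= 2 by rewrite cards2; case: (_ != _).
  rewrite -/(K j); lia.
have [x [xi xK]] : exists x : 'I_(r.+1) -> E, {in setT &, injective x} /\
    {in setT, forall j, x j \in K j}.
  apply: (hall (e_ ord0) (leqnn _)) => S _.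
  case: (set_0Vmem S) => [-> | [j jS]]; first by rewrite cards0.
  apply: (leq_trans _ (subset_leq_card (bigcup_sup _ jS))).
  apply: leq_trans (hK j); apply: (leq_trans (max_card _)); by rewrite card_ord.
have xK' : forall j, [/\ x j != e_ j, x j != f_ j &
     ~~ ((x j \in nbhd verts (e_ j)) && (x j \in nbhd verts (f_ j)))].
  move=> j; have := xK j (in_setT j); rewrite in_setC in_setU in_set2 in_setI !negb_or.
  by case/andP => h /andP [-> ->].
have xnes : forall j k, x j != es k.
  move=> j k; apply/eqP => xe; case: (xK' j) => ne nf; apply/negP; apply/negPn.
  rewrite !inE ne nf /= xe; apply/andP; split; rewrite setIC; exact: es_inter.
pose ia := fun j : 'I_(r.+1) => if verts (e_ j) :&: verts (x j) != set0
             then Ordinal (h2 j) else Ordinal (h1 j).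
pose a := fun j => es (ia j).
exists (t * n).-1; first lia.
apply: (@colour_main V E 'I_(r.+1) verts a x (t * n).-1).
- move=> i j /es_inj; rewrite /ia.
  case: ifP => _; case: ifP => _ /(congr1 val) /= e; apply: val_inj => /=; lia.
- by move=> i j; apply: xi; rewrite inE.
- by move=> i j; rewrite eq_sym xnes.
- move=> j; rewrite /a /ia; case: ifP => [h | /negbT]; last by rewrite negbK.
  case: (xK' j) => ne nf; rewrite !inE ne nf /= h /= => hf.
  by rewrite -/(f_ j); move: hf; rewrite negbK.
- rewrite card_ord hE; lia.
Qed.
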